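(* Let $d\ge1$, let $\pi_1,\dots,\pi_n>0$ with $\sum_i\pi_i=1$, and let $b_1,\dots,b_N$ be a basis of $V_d=\{p\in\mathbb{R}[x]_d:p(\mathbf1)=0\}$. Then there exists a positive definite $N\times N$ matrix $A$ such that $$\Big(\sum_{d'=0}^{d-1}\|x\|_\pi^{2d'}\Big)\,\|x-\mathbf1\|_\pi^2=b(x)^\top A\,b(x),\qquad b(x)=(b_1(x),\dots,b_N(x))^\top.$$
   Context: $\|x\|_\pi^2=\sum_i\pi_ix_i^2$; $\mathbf 1=(1,\dots,1)\in\mathbb{R}^n$; $\mathbb{R}[x]_k$ denotes real polynomials in $x=(x_1,\dots,x_n)$ of degree at most $k$. *)

(* Defs.v *)
From HB Require Import structures.
From mathcomp Require Import all_boot all_order all_algebra.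
From mathcomp Require Import reals.
From mathcomp Require Import mpoly.
Set Implicit Arguments. Unset Strict Implicit. Unset Printing Implicit Defensive.
Import Order.TTheory GRing.Theory Num.Theory.
Local Open Scope ring_scope.

Definition sqnorm_pi (R : realType) (n : nat) (pi x : 'I_n -> R) : R :=
  \sum_(i < n) pi i * x i ^+ 2.

(* membership in V_d = { p in R[x]_d : p(1) = 0 }  (msize p = 1 + deg p) *)
Definition in_Vd (R : realType) (n d : nat) (p : {mpoly R[n]}) : Prop :=
  (msize p <= d.+1)%N /\ p.@[fun _ => 1] = 0.

Definition is_basis_Vd (R : realType) (n d N : nat) (b : 'I_N -> {mpoly R[n]}) : Prop :=
  [/\ (forall i, in_Vd d (b i)),
      (forall c : 'I_N -> R, \sum_(i < N) c i *: b i = 0 -> forall i, c i = 0)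
    & (forall p, in_Vd d p -> exists c : 'I_N -> R, p = \sum_(i < N) c i *: b i)].

Definition posdef (R : realType) (N : nat) (A : 'M[R]_N) : Prop :=
  A^T = A /\ forall v : 'rV[R]_N, v != 0 -> 0 < (v *m A *m v^T) 0 0.

Definition bvec (R : realType) (n N : nat) (b : 'I_N -> {mpoly R[n]}) (x : 'I_n -> R)
  : 'rV[R]_N := \row_(i < N) (b i).@[x].

(* Main.v *)
Require Import Defs.
From HB Require Import structures.
From mathcomp Require Import all_boot all_order all_algebra.
From mathcomp Require Import reals.
From mathcomp Require Import mpoly.
From mathcomp Require Import ring lra.
Set Implicit Arguments. Unset Strict Implicit. Unset Printing Implicit Defensive.
Import Order.TTheory GRing.Theory Num.Theory.
Local Open Scope ring_scope.

Section Gen.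
Variables (R : realType) (n : nat) (pi : 'I_n -> R).

Fixpoint gen (k : nat) : seq (R * {mpoly R[n]}) :=
  if k is k'.+1 then [seq (pi j * w.1, 'X_j * w.2) | j <- enum 'I_n, w <- gen k']
  else [seq (pi i, 'X_i - 1) | i <- enum 'I_n].

Definition Q (gs : seq (R * {mpoly R[n]})) (x : 'I_n -> R) : R :=
  \sum_(w <- gs) w.1 * (w.2).@[x] ^+ 2.

Lemma Q_gen k x : Q (gen k) x = sqnorm_pi pi x ^+ k * sqnorm_pi pi (fun i => x i - 1).
Proof.
elim: k => [|k IH] /=.
  rewrite expr0 mul1r /Q big_map /sqnorm_pi big_enum /=.
  by apply: eq_bigr => i _; rewrite mevalB mevalXU meval1.
rewrite /Q big_allpairs_dep /= exprS -mulrA -IH /Q /sqnorm_pi big_enum /= big_distrl /=.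
apply: eq_bigr => j _; rewrite big_distrr /=; apply: eq_bigr => w _.
rewrite mevalM mevalXU; ring.
Qed.
Fixpoint Gall (k : nat) : seq (R * {mpoly R[n]}) :=
  if k is k'.+1 then Gall k' ++ gen k' else [::].

Lemma Q_Gall d x : Q (Gall d) x =
  (\sum_(k < d) sqnorm_pi pi x ^+ k) * sqnorm_pi pi (fun i => x i - 1).
Proof.
elim: d => [|d IH] /=; first by rewrite /Q big_nil big_ord0 mul0r.
by rewrite /Q big_cat /= -/(Q _ x) -/(Q _ x) IH Q_gen big_ord_recr /= mulrDl.
Qed.

Lemma gen_pos k : (forall i, 0 < pi i) -> forall w, w \in gen k -> 0 < w.1.
Proof.
move=> hpi; elim: k => [|k IH] w /=.
  by case/mapP => i _ ->; apply: hpi.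
case/allpairsPdep => j [w' [_ hw' ->]] /=; rewrite mulr_gt0 //; exact: IH.
Qed.

Lemma gen_Vd k w : w \in gen k -> (msize w.2 <= k.+2)%N /\ (w.2).@[fun _ => 1] = 0.
Proof.
elim: k w => [|k IH] w /=.
  case/mapP => i _ -> /=; split; last by rewrite mevalB mevalXU meval1 subrr.
  apply: (leq_trans (msizeD_le _ _)); rewrite msizeN msizeX mdeg1 msize1.
  by rewrite geq_max.
case/allpairsPdep => j [w' [_ hw' ->]] /=.
have [hs he] := IH _ hw'; split; last by rewrite mevalM he mulr0.
have [->|nz] := eqVneq w'.2 0; first by rewrite mulr0 msize0.
rewrite msizeM ?msizeX ?mdeg1 //.
by apply/eqP => /(congr1 (fun p : {mpoly R[n]} => msize p)); rewrite msizeX msize0 mdeg1.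
Qed.

Lemma gen_span k (b : 'X_{1..n}) (i : 'I_n) : mdeg b = k ->
  exists2 w, w \in gen k & w.2 = 'X_[b] * ('X_i - 1).
Proof.
elim: k b => [|k IH] b hb /=.
  move/eqP: hb; rewrite mdeg_eq0 => /eqP ->.
  exists (pi i, 'X_i - 1); last by rewrite mpolyX0 mul1r.
  by apply: map_f; rewrite mem_enum.
case: (pickP (fun j => 0 < b j)%N) => [j hj|h0]; last first.
  suff: b = 0%MM by move=> e; move: hb; rewrite e mdeg0.
  by apply/mnmP => j; rewrite mnm0E; move: (h0 j) => /= /negbT; rewrite lt0n negbK => /eqP.
have hb' : mdeg (b - U_(j))%MM = k.
  have e : b = (U_(j) + (b - U_(j)))%MM.
    by apply/mnmP => l; rewrite mnmDE mnmBE mnm1E; case: eqP => [<-|]; [rewrite subnKC | rewrite subn0].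
  by move: hb; rewrite {1}e mdegD mdeg1 add1n => -[].
have [w hw ew] := IH _ hb'.
exists (pi j * w.1, 'X_j * w.2).
  by apply/allpairsPdep; exists j, w; split => //; rewrite mem_enum.
rewrite /= ew mulrA -mpolyXD; congr (_ * _); congr (mpolyX _ _); apply/mnmP => l.
by rewrite mnmDE mnmBE mnm1E; case: eqP => [<-|]; [rewrite subnKC | rewrite subn0].
Qed.
End Gen.

Lemma mnm_split n (b : 'X_{1..n}) j : (0 < b j)%N -> b = (U_(j) + (b - U_(j)))%MM.
Proof.
move=> hj; apply/mnmP => l; rewrite mnmDE mnmBE mnm1E.
by case: eqP => [<-|]; [rewrite subnKC | rewrite subn0].
Qed.

Lemma mnm_pos n (b : 'X_{1..n}) : b != 0%MM -> exists j, (0 < b j)%N.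
Proof.
move=> nz; case: (pickP (fun j => 0 < b j)%N) => [j hj|h0]; first by exists j.
case/eqP: nz; apply/mnmP => j; rewrite mnm0E.
by move: (h0 j) => /= /negbT; rewrite lt0n negbK => /eqP.
Qed.

Lemma span_Vd (R : realType) n d (P : {mpoly R[n]} -> Prop) :
  P 0 -> (forall p q, P p -> P q -> P (p + q)) -> (forall c p, P p -> P (c *: p)) ->
  (forall (b : 'X_{1..n}) i, (mdeg b < d)%N -> P ('X_[b] * ('X_i - 1))) ->
  forall p, in_Vd d p -> P p.
Proof.
move=> P0 PD PZ Pg.
have PX : forall k (m : 'X_{1..n}), mdeg m = k -> (k <= d)%N -> P ('X_[m] - 1).
  elim => [|k IH] m hm hk.
    by move/eqP: hm; rewrite mdeg_eq0 => /eqP ->; rewrite mpolyX0 subrr.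
  have nz : m != 0%MM by apply/eqP => e; move: hm; rewrite e mdeg0.
  have [j hj] := mnm_pos nz.
  have e := mnm_split hj.
  have hm' : mdeg (m - U_(j))%MM = k by move: hm; rewrite {1}e mdegD mdeg1 add1n => -[].
  have -> : 'X_[m] - 1 = 'X_[m - U_(j)] * ('X_j - 1) + ('X_[m - U_(j)] - 1) :> {mpoly R[n]}.
    by rewrite {1}e mpolyXD; ring.
  apply: PD; first by apply: Pg; rewrite hm'.
  by apply: (IH _ hm'); apply: ltnW.
move=> p [hs he].
have e1 : p.@[fun _ => 1] = \sum_(m <- msupp p) p@_m.
  by rewrite mevalE; apply: eq_bigr => m _; rewrite big1 ?mulr1 // => i _; rewrite expr1n.
have -> : p = \sum_(m <- msupp p) p@_m *: ('X_[m] - 1).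
  under eq_bigr do rewrite scalerBr.
  rewrite sumrB -mpolyE -scaler_suml -e1 he scale0r subr0 //.
rewrite big_seq; apply: (big_ind P) => // m hm; apply: PZ.
apply: (PX _ m erefl); rewrite -ltnS; exact: leq_trans (msize_mdeg_lt hm) hs.
Qed.

Definition qf (R : realType) N (u : 'rV[R]_N) (M : 'M[R]_N) : R := (u *m M *m u^T) 0 0.

Lemma qfD (R : realType) N (u : 'rV[R]_N) A B : qf u (A + B) = qf u A + qf u B.
Proof. by rewrite /qf mulmxDr mulmxDl mxE. Qed.

Lemma qf_rank1 (R : realType) N (u r : 'rV[R]_N) a :
  qf u (a *: (r^T *m r)) = a * ((u *m r^T) 0 0) ^+ 2.
Proof.
rewrite /qf -scalemxAr -scalemxAl mxE; congr (_ * _).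
rewrite mulmxA -(mulmxA (u *m r^T)) mxE big_ord1 expr2; congr (_ * _).
by rewrite -{1}(trmxK r) -trmx_mul mxE.
Qed.

Lemma bvec_coord (R : realType) n N (b : 'I_N -> {mpoly R[n]}) (c : 'I_N -> R) x :
  (\sum_(i < N) c i *: b i).@[x] = (bvec b x *m (\row_i c i)^T) 0 0.
Proof.
rewrite /bvec mxE raddf_sum /=; apply: eq_bigr => i _.
by rewrite mevalZ !mxE mulrC.
Qed.

Lemma repr_list (R : realType) n d N (b : 'I_N -> {mpoly R[n]}) :
  (forall p, in_Vd d p -> exists c : 'I_N -> R, p = \sum_(i < N) c i *: b i) ->
  forall gs : seq (R * {mpoly R[n]}),
  (forall w, w \in gs -> 0 < w.1 /\ in_Vd d w.2) ->
  exists A : 'M[R]_N, [/\ A^T = A,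
    (forall x, Q gs x = qf (bvec b x) A),
    (forall v, 0 <= qf v A) &
    (forall v, qf v A = 0 -> forall w, w \in gs ->
       exists c : 'I_N -> R, w.2 = \sum_(i < N) c i *: b i /\ \sum_(i < N) v 0 i * c i = 0)].
Proof.
move=> hc; elim => [|w gs IH] hgs.
  exists 0; split => //; first by rewrite trmx0.
  - by move=> x; rewrite /Q big_nil /qf mulmx0 mul0mx mxE.
  - by move=> v; rewrite /qf mulmx0 mul0mx mxE.
have [A [hAT hAQ hA0 hAv]] : exists A : 'M[R]_N, [/\ A^T = A,
    (forall x, Q gs x = qf (bvec b x) A),
    (forall v, 0 <= qf v A) &
    (forall v, qf v A = 0 -> forall w, w \in gs ->
       exists c : 'I_N -> R, w.2 = \sum_(i < N) c i *: b i /\ \sum_(i < N) v 0 i * c i = 0)].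
  by apply: IH => w' hw'; apply: hgs; rewrite in_cons hw' orbT.
have [wpos wV] := hgs w (mem_head _ _).
have [c hcw] := hc _ wV.
pose r : 'rV[R]_N := \row_i c i.
exists (A + w.1 *: (r^T *m r)); split.
- by rewrite linearD /= linearZ /= hAT trmx_mul trmxK.
- move=> x; rewrite qfD qf_rank1 -hAQ /Q big_cons addrC; congr (_ + _).
  by rewrite hcw bvec_coord.
- by move=> v; rewrite qfD qf_rank1 addr_ge0 ?hA0 // mulr_ge0 ?sqr_ge0 // ltW.
- move=> v; rewrite qfD qf_rank1 => h0.
  have hpos : 0 <= w.1 * ((v *m r^T) 0 0) ^+ 2 by rewrite mulr_ge0 ?sqr_ge0 // ltW.
  have /andP[/eqP h1a /eqP h1b] : (qf v A == 0) && (w.1 * ((v *m r^T) 0 0) ^+ 2 == 0).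
    by rewrite -paddr_eq0 ?h0 ?eqxx.
  move=> w'; rewrite in_cons => /orP [/eqP ->|hw']; last by apply: hAv.
  exists c; split => //.
  have e : \sum_(i < N) v 0 i * c i = (v *m r^T) 0 0.
    by rewrite mxE; apply: eq_bigr => i _; rewrite !mxE.
  by rewrite e; move: h1b => /eqP; rewrite mulf_eq0 (gt_eqF wpos) /= sqrf_eq0 => /eqP.
Qed.

Lemma mem_Gall (R : realType) n (pi : 'I_n -> R) d w :
  w \in Gall pi d -> exists2 k, (k < d)%N & w \in gen pi k.
Proof.
elim: d => [|d IH] //=; rewrite mem_cat => /orP [/IH [k hk hw]|hw].
  by exists k => //; apply: ltnW.
by exists d.
Qed.

Lemma gen_Gall (R : realType) n (pi : 'I_n -> R) d k w :
  (k < d)%N -> w \in gen pi k -> w \in Gall pi d.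
Proof.
elim: d => [|d IH] //= hk hw; rewrite mem_cat.
move: hk; rewrite ltnS leq_eqVlt => /orP [/eqP e|/IH h]; first by rewrite -e hw orbT.
by rewrite h.
Qed.

Theorem mainTheorem9 (R : realType) (n d N : nat) (pi : 'I_n -> R)
  (b : 'I_N -> {mpoly R[n]}) :
  (1 <= d)%N ->
  (forall i, 0 < pi i) ->
  \sum_(i < n) pi i = 1 ->
  is_basis_Vd d b ->
  exists A : 'M[R]_N, posdef A /\
    forall x : 'I_n -> R,
      (\sum_(k < d) sqnorm_pi pi x ^+ k) * sqnorm_pi pi (fun i => x i - 1)
      = (bvec b x *m A *m (bvec b x)^T) 0 0.
Proof.
move=> hd hpi _ [hbV hli hsp].
have hgs : forall w, w \in Gall pi d -> 0 < w.1 /\ in_Vd d w.2.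
  move=> w /mem_Gall [k hk hw]; split; first exact: gen_pos hw.
  have [hs he] := gen_Vd hw; split => //; exact: leq_trans hs (hk : (k.+2 <= d.+1)%N).
have [A [hAT hAQ hA0 hAv]] := repr_list hsp hgs.
exists A; split; last by move=> x; rewrite -Q_Gall hAQ.
split => // v nzv.
rewrite lt_def hA0 andbT; apply/negP => /eqP hv0; move/eqP: nzv; apply.
pose P (p : {mpoly R[n]}) := exists c : 'I_N -> R,
  p = \sum_(i < N) c i *: b i /\ \sum_(i < N) v 0 i * c i = 0.
have hP : forall p, in_Vd d p -> P p.
  apply: span_Vd.
  - by exists (fun _ => 0); split; rewrite big1 // => i _; rewrite ?scale0r ?mulr0.
  - move=> p q [cp [ep sp]] [cq [eq sq]]; exists (fun i => cp i + cq i); split.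
      by rewrite ep eq -big_split; apply: eq_bigr => i _; rewrite scalerDl.
    by under eq_bigr do rewrite mulrDr; rewrite big_split /= sp sq addr0.
  - move=> a p [cp [ep sp]]; exists (fun i => a * cp i); split.
      by rewrite ep scaler_sumr; apply: eq_bigr => i _; rewrite scalerA.
    by under eq_bigr do rewrite mulrCA; rewrite -mulr_sumr sp mulr0.
  - move=> be i hbe.
    have [w hw ew] := gen_span pi i (erefl (mdeg be)).
    rewrite -ew; exact: hAv hv0 w (gen_Gall hbe hw).
apply/rowP => j; rewrite mxE.
have [c [ec sc]] := hP _ (hbV j).
have hcj : forall i, c i = (i == j)%:R.
  move=> i; apply/eqP; rewrite -subr_eq0; apply/eqP; move: i.
  apply: (hli (fun i => c i - (i == j)%:R)); under eq_bigr do rewrite scalerBl.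
  rewrite sumrB -ec (bigD1 j) //= big1 ?eqxx ?scale1r ?addr0 ?subrr // => i /negbTE ->.
  by rewrite scale0r.
rewrite -sc (bigD1 j) //= big1 ?hcj ?eqxx ?mulr1 ?addr0 // => i /negbTE hi.
by rewrite hcj hi mulr0.
Qed.
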